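(* Let $n\geq 2$ with $n\neq 4$. Each of the following statements is equivalent to $d_n < \sqrt{2}\,(p_n)^{1/2}$: 1. $(p_{n+1}+d_n)\,p_n$ is the largest odd multiple of $p_n$ that is at most $p_{n+1}^2$. 2. The open interval $(p_n^2, p_{n+1}^2)$ contains exactly $d_n$ odd multiples of $p_n$. 3. $\displaystyle \frac{d_n}{2} + \sum_{i=1}^{d_n-1} i < p_n$.
   Context: $p_n$ denotes the $n$th prime ($p_1=2$) and $d_n := p_{n+1}-p_n$. *)

(* Defs.v *)
From HB Require Import structures.
From mathcomp Require Import all_boot all_order all_algebra.
From mathcomp Require Import reals.
Set Implicit Arguments. Unset Strict Implicit. Unset Printing Implicit Defensive.
Import Order.TTheory GRing.Theory Num.Theory.

Lemma exists_prime_above (m : nat) : exists p, (m < p) && prime p.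
Proof. by case: (prime_above m) => p H1 H2; exists p; rewrite H1 H2. Qed.

Definition next_prime (m : nat) : nat := ex_minn (exists_prime_above m).

(* p_ n = the n-th prime, 1-indexed: p_ 1 = 2, p_ 2 = 3, ... (p_ 0 = 1 is junk). *)
Definition p_ (n : nat) : nat := iter n next_prime 1.

Definition d_ (n : nat) : nat := p_ n.+1 - p_ n.

(* Main.v *)
Require Import Defs.
From HB Require Import structures.
From mathcomp Require Import all_boot all_order all_algebra.
From mathcomp Require Import reals.
From mathcomp Require Import zify lra.
Import Order.TTheory GRing.Theory Num.Theory.

Lemma card_iota (N : nat) (P : pred nat) :
  #|[set k : 'I_N | P k]| = count P (iota 0 N).
Proof.
rewrite -val_enum_ord count_map -size_filter cardsE cardE /enum_mem.
congr size; rewrite -filter_predI; apply: eq_filter => k /=. by rewrite andbT.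
Qed.

Lemma odd_ex n : odd n -> exists a, n = 2 * a + 1.
Proof. move=> h; exists n./2; rewrite -[n in n = _]odd_double_half h; lia. Qed.

Lemma even_ex n : ~~ odd n -> exists a, n = 2 * a.
Proof. move=> h; exists n./2; rewrite -[n in n = _]odd_double_half (negbTE h); lia. Qed.

Arguments odd_ex {n}.
Arguments even_ex {n}.

Lemma next_prime_spec m : (m < next_prime m) && prime (next_prime m).
Proof. rewrite /next_prime; by case: ex_minnP. Qed.

Lemma p_S n : p_ n.+1 = next_prime (p_ n).
Proof. by rewrite /p_ iterS. Qed.

Lemma p_ge n : n < p_ n.
Proof.
elim: n => [|n IH] //; rewrite p_S.
by case/andP: (next_prime_spec (p_ n)) => h _; lia.
Qed.

Lemma p_prime n : 0 < n -> prime (p_ n).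
Proof. case: n => // n _; rewrite p_S; by case/andP: (next_prime_spec (p_ n)). Qed.

Lemma p_lt n : p_ n < p_ n.+1.
Proof. rewrite p_S; by case/andP: (next_prime_spec (p_ n)). Qed.

Section Arith.
Variables (p d : nat).
Hypotheses (hp : odd p) (hd : ~~ odd d) (hd0 : 0 < d).

Lemma sq_ne : d ^ 2 != 2 * p.
Proof.
case: (odd_ex hp) => b ->; case: (even_ex hd) => c ->.
apply/eqP => h; lia.
Qed.

Definition f j := (p + 2 * j.+1) * p.
Definition P k := [&& p ^ 2 < k, odd k & p %| k].

Lemma f_inj : injective f.
Proof.
move=> i j; rewrite /f => /eqP; rewrite eqn_pmul2r; last by case/odd_ex: hp => b ->; lia.
move/eqP; lia.
Qed.

Lemma Pf j : P (f j).
Proof.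
rewrite /P /f; apply/and3P; split.
- case/odd_ex: hp => b ->; rewrite expnS expn1 ltn_pmul2r; lia.
- by rewrite ssrnat.oddM ssrnat.oddD hp ssrnat.oddM andbT.
- by apply: dvdn_mull.
Qed.

Lemma count_lb N m : (forall j, j < m -> f j < N) -> m <= count P (iota 0 N).
Proof.
move=> H.
have U : uniq (map f (iota 0 m)) by rewrite map_inj_uniq ?iota_uniq //; apply: f_inj.
rewrite -size_filter -[m in m <= _](size_iota 0) -(size_map f).
apply: uniq_leq_size => // x /mapP [j]; rewrite mem_iota => hj ->.
by rewrite mem_filter Pf mem_iota /= H //; lia.
Qed.

Lemma count_ub N m : (forall k, P k -> k < N -> exists j, j < m /\ k = f j) ->
  count P (iota 0 N) <= m.
Proof.
move=> H.
rewrite -size_filter -[m in _ <= m](size_iota 0) -[size (iota 0 m)](size_map f).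
apply: uniq_leq_size; first by apply: filter_uniq; apply: iota_uniq.
move=> x; rewrite mem_filter mem_iota => /andP [Px /andP [_ xN]].
case: (H x Px xN) => j [jm ->]; apply/mapP; exists j => //; rewrite mem_iota; lia.
Qed.

Lemma item2 : (d ^ 2 < 2 * p) <-> count P (iota 0 ((p + d) ^ 2)) = d.
Proof.
have p0 : 0 < p by case/odd_ex: hp => b ->; lia.
split.
- move=> hlt; apply/eqP; rewrite eqn_leq; apply/andP; split.
  + apply: count_ub => k /and3P [h1 h2 /dvdnP [m km]] hk.
    move: h2; rewrite km ssrnat.oddM => /andP [om _].
    case: (odd_ex om) => a ea; case: (odd_ex hp) => b eb.
    have pm : p < m by move: h1; rewrite km expnS expn1 ltn_pmul2r.
    have : m * p < (p + 2 * d + 2) * p.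
      have e : (p + d) ^ 2 = p * p + 2 * d * p + d ^ 2 by rewrite !expnS expn0; lia.
      move: hk; rewrite e; lia.
    rewrite ltn_pmul2r // => hm.
    exists (a - b - 1); split; first lia.
    by rewrite /f; congr (_ * _); lia.
  + apply: count_lb => j hj; rewrite /f.
    have : (p + d) ^ 2 = (p + 2 * d) * p + d ^ 2 by rewrite !expnS expn0; lia.
    move=> ->.
    have : (p + 2 * j.+1) * p <= (p + 2 * d) * p by rewrite leq_mul2r; lia.
    have : 0 < d ^ 2 by rewrite expn_gt0 hd0.
    lia.
- move=> hc; rewrite ltnNge; apply/negP => hge.
  have hgt : 2 * p < d ^ 2 by move: sq_ne hge; lia.
  suff : d < d by rewrite ltnn.
  rewrite -[X in _ < X]hc; apply: count_lb => j hj; rewrite /f.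
  have : (p + d) ^ 2 = (p + 2 * d) * p + d ^ 2 by rewrite !expnS expn0; lia.
  move=> ->.
  have : (p + 2 * j.+1) * p <= (p + 2 * d + 2) * p by rewrite leq_mul2r; lia.
  have : (p + 2 * d + 2) * p = (p + 2 * d) * p + 2 * p by lia.
  lia.
Qed.

Lemma item1 : (d ^ 2 < 2 * p) <->
  [/\ odd ((p + d + d) * p), (p %| (p + d + d) * p), ((p + d + d) * p <= (p + d) ^ 2)
       & forall k : nat, odd k -> (p %| k) -> (k <= (p + d) ^ 2) ->
           (k <= (p + d + d) * p)].
Proof.
have p0 : 0 < p by case/odd_ex: hp => b ->; lia.
have e : (p + d) ^ 2 = p * p + 2 * d * p + d ^ 2 by rewrite !expnS expn0; lia.
have o1 : odd ((p + d + d) * p) by rewrite ssrnat.oddM !ssrnat.oddD hp (negbTE hd).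
have o2 : p %| (p + d + d) * p by apply: dvdn_mull.
have o3 : (p + d + d) * p <= (p + d) ^ 2 by rewrite e; lia.
split.
- move=> hlt; split => // k ok /dvdnP [m km] hk.
  move: ok; rewrite km ssrnat.oddM => /andP [om _].
  case: (odd_ex om) => a ea; case: (odd_ex hp) => b eb.
  have : m * p < (p + 2 * d + 2) * p by move: hk; rewrite km e; lia.
  rewrite ltn_pmul2r // => hm.
  rewrite leq_mul2r; apply/orP; right; lia.
- case => _ _ _ H; rewrite ltnNge; apply/negP => hge.
  have hgt : 2 * p < d ^ 2 by move: sq_ne hge; lia.
  have := H ((p + d + d + 2) * p).
  rewrite ssrnat.oddM !ssrnat.oddD hp (negbTE hd) dvdn_mull //= e.
  have -> : (p + d + d + 2) * p = p * p + 2 * d * p + 2 * p by lia.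
  have -> : (p + d + d) * p = p * p + 2 * d * p by lia.
  lia.
Qed.

End Arith.

Lemma sum_formula d : (\sum_(1 <= i < d) i).*2 + d = d ^ 2.
Proof.
elim: d => [|d IH]; first by rewrite big_geq.
case: d IH => [|d] IH; first by rewrite big_geq.
rewrite big_nat_recr //=.
move: IH; rewrite !expnS expn0; lia.
Qed.

Local Open Scope ring_scope.

Lemma item3 (R : realType) (p d : nat) :
  (d ^ 2 < 2 * p)%N <-> ((d%:R : R) / 2 + \sum_(1 <= i < d) (i%:R : R) < p%:R).
Proof.
rewrite -natr_sum.
have H : ((d ^ 2)%:R : R) = 2 * (\sum_(1 <= i < d) i)%:R + d%:R.
  by rewrite -sum_formula natrD -muln2 natrM mulrC.
rewrite -(ltr_nat R) natrM H.
split => h; lra.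
Qed.

Lemma realA (R : realType) (p d : nat) : (0 < p)%N ->
  ((d%:R : R) < Num.sqrt 2 * Num.sqrt (p%:R)) <-> (d ^ 2 < 2 * p)%N.
Proof.
move=> p0.
rewrite -sqrtrM ?ler0n // -[X in X < _](@ger0_norm _ (d%:R : R)) ?ler0n //.
rewrite -sqrtr_sqr ltr_sqrt; last by rewrite mulr_gt0 // ltr0n.
by rewrite -natrX -natrM ltr_nat.
Qed.


Theorem theorem2p8 (R : realType) (n : nat) :
  (2 <= n)%N -> n <> 4%N ->
  let p := p_ n in let q := p_ n.+1 in let d := d_ n in
  let A := (d%:R : R) < Num.sqrt 2 * Num.sqrt (p%:R) in
  (A <->
     [/\ odd ((q + d) * p), (p %| (q + d) * p)%N, ((q + d) * p <= q ^ 2)%N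
       & forall k : nat, odd k -> (p %| k)%N -> (k <= q ^ 2)%N ->
           (k <= (q + d) * p)%N])
  /\
  (A <-> #|[set k : 'I_(q ^ 2) | [&& (p ^ 2 < k)%N, odd k & (p %| k)%N]]| = d)
  /\
  (A <-> (d%:R / 2 + \sum_(1 <= i < d) (i%:R : R) < p%:R)).
Proof.
move=> h2 _ p q d A.
have pr : prime (p_ n) by apply: p_prime; lia.
have qr : prime (p_ n.+1) by apply: p_prime.
have lt := p_lt n; have ge := p_ge n.
have op : odd (p_ n).
  by case: (even_prime pr) => // e; move: ge; rewrite e; lia.
have oq : odd (p_ n.+1).
  by case: (even_prime qr) => // e; move: ge lt; rewrite e; lia.
have hq : p_ n.+1 = (p_ n + d_ n)%N by rewrite /d_; lia.
have hd : ~~ odd (d_ n) by rewrite /d_ oddB ?op ?oq //; lia.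
have hd0 : (0 < d_ n)%N by rewrite /d_; lia.
have p0 : (0 < p_ n)%N by lia.
rewrite /A /p /q /d hq.
have rA := realA R (p_ n) (d_ n) p0.
split; [|split].
- apply: iff_trans rA _; apply: item1; assumption.
- rewrite (card_iota _ (fun k => [&& (p_ n ^ 2 < k)%N, odd k & (p_ n %| k)%N])); apply: iff_trans rA _; apply: item2; assumption.
- apply: iff_trans rA _; exact: item3.
Qed.
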